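(* Let $p\in(0,1)$. For $n\ge1$, let $X_n$ be the maximum weight of a directed path from $1$ to $n$ in the transitive tournament on $\{1,\ldots,n\}$ with independent $\mathrm{Bernoulli}(p)$ edge weights. Let $f(n)=\mathbb{E}[X_n]$ for $n\ge1$, and $f(0)=0$ (so $f(0)=f(1)=0$). Then for every $n\ge1$, \[ f(n)=\sum_{i=2}^{n}\big(1-(1-p)^{i-1}\big)(1-p)^{\binom{i-1}{2}}\big(f(n-i+1)+1\big). \]
   Context: The transitive tournament on $\{1,\ldots,n\}$ has a directed edge $(i,j)$ for every $1\le i<j\le n$. Each edge independently has weight $1$ with probability $p$ and weight $0$ otherwise. The weight of a path is the sum of its edge weights. $\binom{0}{2}=\binom{1}{2}=0$. *)

(* Defs.v *)
From HB Require Import structures.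
From mathcomp Require Import all_boot all_order all_algebra.
Set Implicit Arguments. Unset Strict Implicit. Unset Printing Implicit Defensive.
Import Order.TTheory GRing.Theory Num.Theory.
Local Open Scope ring_scope.

(* Vertices of the transitive tournament on {1,...,n} are 'I_n (vertex k+1 is
   represented by k).  The edge (i,j) exists iff i < j. *)
Definition weighting (n : nat) := {ffun 'I_n * 'I_n -> bool}.

Definition wprob (R : realFieldType) (p : R) (n : nat) (w : weighting n) : R :=
  \prod_(e : 'I_n * 'I_n)
     (if (e.1 < e.2)%N then (if w e then p else 1 - p)
      else (if w e then 0 else 1)).

(* A directed path in the transitive tournament is an increasing sequence of
   vertices; it is determined by its vertex set A. *)
Definition path_of (n : nat) (A : {set 'I_n}) : seq 'I_n :=
  sort (fun a b : 'I_n => (a <= b)%N) (enum A).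

Definition path_weight (n : nat) (w : weighting n) (s : seq 'I_n) : nat :=
  \sum_(e <- zip s (behead s)) (w e : nat).

Definition is_path_1_n (n : nat) (A : {set 'I_n}) : bool :=
  [exists i in A, val i == 0%N] && [exists i in A, val i == n.-1].

Definition Xmax (n : nat) (w : weighting n) : nat :=
  \max_(A : {set 'I_n} | is_path_1_n A) path_weight w (path_of A).

Definition f (R : realFieldType) (p : R) (n : nat) : R :=
  match n with
  | 0 => 0
  | _ => \sum_(w : weighting n) wprob p w * (Xmax w)%:R
  end.

(* Main.v *)
Require Import Defs.
From mathcomp Require Import all_boot all_order all_algebra.
From mathcomp Require Import zify ring.
Import Order.TTheory GRing.Theory Num.Theory.
Set Implicit Arguments. Unset Strict Implicit. Unset Printing Implicit Defensive.

Fixpoint pwf (W : nat -> nat -> bool) (x : nat) (s : seq nat) : nat :=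
  match s with [::] => 0 | y :: s' => W x y + pwf W y s' end.

Definition good (n : nat) (s : seq nat) : bool :=
  [&& path ltn 0 s, all (fun x => x < n) s & last 0 s == n.-1].

Definition IsMax n W m : Prop :=
  (forall s, good n s -> pwf W 0 s <= m) /\ (exists2 s, good n s & pwf W 0 s = m).

Lemma IsMax_uniq n W m1 m2 : IsMax n W m1 -> IsMax n W m2 -> m1 = m2.
Proof.
move=> [U1 [s1 g1 e1]] [U2 [s2 g2 e2]].
apply/eqP; rewrite eqn_leq; apply/andP; split.
- by rewrite -e1; apply: U2.
- by rewrite -e2; apply: U1.
Qed.

Lemma pwf_eq W1 W2 N x s : x < N -> all (fun y => y < N) s ->
  (forall a b, a < N -> b < N -> W1 a b = W2 a b) -> pwf W1 x s = pwf W2 x s.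
Proof.
move=> + + E; elim: s x => [//|y s IH] x xN /= /andP[yN aS].
by rewrite E // (IH y).
Qed.

Lemma IsMax_eq N W1 W2 m : 0 < N ->
  (forall a b, a < N -> b < N -> W1 a b = W2 a b) -> IsMax N W1 m -> IsMax N W2 m.
Proof.
move=> N0 E [U [s g e]].
have E' : forall a b, a < N -> b < N -> W1 a b = W2 a b by [].
have Hs : forall t, good N t -> pwf W2 0 t = pwf W1 0 t.
{ move=> t /and3P[_ aS _]; apply: pwf_eq aS _ => // a b aN bN; by rewrite E. }
split.
- by move=> t gt; rewrite Hs //; apply: U.
- by exists s; rewrite ?Hs.
Qed.

Lemma pwf_zero W N x s : (forall a b, a < b -> b < N -> W a b = false) ->
  path ltn x s -> all (fun y => y < N) s -> pwf W x s = 0.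
Proof.
move=> Z; elim: s x => [//|y s IH] x /= /andP[xy ps] /andP[yN aS].
by rewrite Z // (IH y).
Qed.

Definition triv_s n : seq nat := if n.-1 == 0 then [::] else [:: n.-1].

Lemma good_triv n : 0 < n -> good n (triv_s n).
Proof.
rewrite /triv_s /good; case: eqP => /= [->|h] n0; first by rewrite eqxx.
rewrite eqxx andbT andbT; apply/andP; split; lia.
Qed.

Lemma IsMax_zero W N : 0 < N -> (forall a b, a < b -> b < N -> W a b = false) ->
  IsMax N W 0.
Proof.
move=> N0 Z; split.
- move=> s /and3P[ps aS _]; by rewrite (pwf_zero Z ps aS).
- exists (triv_s N); first exact: good_triv.
  by case/and3P: (good_triv N0) => ps aS _; rewrite (pwf_zero Z ps aS).
Qed.

Lemma pwf_shift W k x s :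
  pwf (fun a b => W (a + k) (b + k)) x s = pwf W (x + k) (map (addn^~ k) s).
Proof. by elim: s x => [//|y s IH] x /=; rewrite IH. Qed.

Lemma path_shift k x s : path ltn (x + k) (map (addn^~ k) s) = path ltn x s.
Proof. by rewrite -[x + k]/((addn^~ k) x) path_map; apply: eq_path => a b /=; rewrite ltn_add2r. Qed.

Lemma all_shift k N s : all (fun y => y < N + k) (map (addn^~ k) s) = all (fun y => y < N) s.
Proof. by rewrite all_map; apply: eq_all => a /=; rewrite ltn_add2r. Qed.

Lemma le_last x s z : path ltn x s -> z \in x :: s -> z <= last x s.
Proof.
elim: s x z => [|y s IH] x z /=; first by rewrite inE => _ /eqP ->.
case/andP=> xy ps; rewrite inE => /orP[/eqP ->|zs].
- apply: leq_trans (ltnW xy) _; apply: IH => //; exact: mem_head.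
- exact: IH.
Qed.

Lemma IsMax_step W n k m' : 0 < k -> k < n ->
  (forall a b, a < b -> b < k -> W a b = false) -> (exists2 j, j < k & W j k) ->
  IsMax (n - k) (fun a b => W (a + k) (b + k)) m' -> IsMax n W m'.+1.
Proof.
move=> k0 kn Z [j jk Wjk] [U [s' gs' es']]; split.
- have gen : forall s x, x < k -> path ltn x s -> all (fun y => y < n) s ->
      last x s = n.-1 -> pwf W x s <= m'.+1.
  { elim=> [|y s IH] x /=; first by move=> xk _ _ xl; lia.
    move=> xk /andP[xy ps] /andP[yn aS] ls.
    case: (ltnP y k) => yk.
    - by rewrite Z // add0n; apply: IH.
    - have H1 : pwf W y s <= m'.
      { set s2 := if y == k then s else y :: s.
        have e1 : pwf W y s <= pwf W k s2.
        { rewrite /s2; case: eqP => [->//|_] /=; exact: leq_addl. }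
        have Pk : path ltn k s2.
        { rewrite /s2; case: eqP => [<-//|ne] /=; rewrite ps andbT; lia. }
        have A2 : all (fun y => y < n) s2.
        { by rewrite /s2; case: eqP => _ //=; rewrite yn. }
        have L2 : last k s2 = n.-1.
        { by rewrite /s2; case: eqP => [<-//|_]. }
        have G : all (fun z => k <= z) s2.
        { have := order_path_min ltn_trans Pk; apply: sub_all => z; exact: ltnW. }
        set t := map (subn^~ k) s2.
        have ht : map (addn^~ k) t = s2.
        { rewrite /t -map_comp map_id_in // => z zs /=; rewrite subnK //.
          exact: (allP G). }
        have et : pwf W k s2 = pwf (fun a b => W (a + k) (b + k)) 0 t.
        { by rewrite pwf_shift add0n ht. }
        apply: leq_trans e1 _; rewrite et; apply: U.
        apply/and3P; split.
        - by rewrite -(path_shift k) ht add0n.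
        - by rewrite -(all_shift k) subnK ?ht // ltnW.
        - apply/eqP; have := last_map (addn^~ k) t 0; rewrite ht add0n L2; lia. }
      have : W x y <= 1 by case: (W x y).
      lia. }
  move=> s /and3P[ps aS /eqP ls]; exact: gen.
- set s2 := map (addn^~ k) s'.
  case/and3P: gs' => ps' as' /eqP ls'.
  have e2 : pwf W k s2 = m' by rewrite -es' pwf_shift add0n.
  have P2 : path ltn k s2 by rewrite -(path_shift k 0) add0n in ps' *.
  have A2 : all (fun y => y < n) s2 by rewrite -(subnK (ltnW kn)) all_shift.
  have L2 : last k s2 = n.-1.
  { have := last_map (addn^~ k) s' 0; rewrite add0n => ->; rewrite ls'; lia. }
  case: (eqVneq j 0) => [j0|jn0].
  + exists (k :: s2); last by rewrite /= e2 -j0 Wjk.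
    apply/and3P; split => /=; [by rewrite k0 | by rewrite kn | by rewrite L2].
  + exists (j :: k :: s2); last by rewrite /= e2 Wjk Z //; lia.
    apply/and3P; split => /=.
    * rewrite jk P2 andbT; lia.
    * rewrite kn A2 andbT; lia.
    * by rewrite L2.
Qed.

Definition Wof n (w : weighting n) (a b : nat) : bool :=
  match (insub a : option 'I_n), (insub b : option 'I_n) with
  | Some x, Some y => w (x, y) | _, _ => false end.

Lemma WofE n (w : weighting n) (x y : 'I_n) : Wof w x y = w (x, y).
Proof. by rewrite /Wof !valK. Qed.

Lemma sum_zip n (w : weighting n) (x : 'I_n) (u : seq 'I_n) :
  \sum_(e <- zip (x :: u) u) (w e : nat) = pwf (Wof w) x (map val u).
Proof.
elim: u x => [|y u IH] x; first by rewrite big_nil.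
by rewrite /= big_cons IH WofE.
Qed.

Definition vs n (A : {set 'I_n}) := map val (path_of A).

Lemma vs_sorted n (A : {set 'I_n}) : sorted ltn (vs A).
Proof.
rewrite ltn_sorted_uniq_leq; apply/andP; split.
- rewrite /vs map_inj_uniq; last exact: val_inj.
  by rewrite /path_of sort_uniq enum_uniq.
- rewrite /vs sorted_map /path_of; apply: sort_sorted => a b; exact: leq_total.
Qed.

Lemma mem_vs n (A : {set 'I_n}) x : (x \in vs A) = [exists i in A, val i == x].
Proof.
apply/mapP/existsP => [[i]|[i /andP[iA /eqP <-]]].
- by rewrite /path_of mem_sort mem_enum => iA ->; exists i; rewrite iA eqxx.
- by exists i; rewrite // /path_of mem_sort mem_enum.
Qed.

Lemma vs_good n (A : {set 'I_n}) : is_path_1_n A ->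
  exists2 s, vs A = 0 :: s & good n s.
Proof.
case/andP => /existsP[i0 /andP[i0A /eqP i00]] /existsP[i1 /andP[i1A /eqP i11]].
have m0 : 0 \in vs A by rewrite mem_vs; apply/existsP; exists i0; rewrite i0A i00.
have m1 : n.-1 \in vs A.
{ rewrite mem_vs; apply/existsP; exists i1. rewrite i1A. rewrite i11. by rewrite eqxx. }
have lt : all (fun y => y < n) (vs A).
{ apply/allP => y; rewrite mem_vs => /existsP[i /andP[_ /eqP <-]]; exact: ltn_ord. }
have := vs_sorted A.
move: m0 m1 lt; case: (vs A) => [//|y s].
rewrite inE => /orP[/eqP y0|m0] m1 /andP[yn aS] ps.
- subst y; exists s => //; apply/and3P; split => //.
  have h1 := le_last ps m1.
  have : last 0 s < n.
  { have := mem_last 0 s; rewrite inE => /orP[/eqP ->|]; first by have := ltn_ord i0; lia.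
    by move/(allP aS). }
  move=> h2; apply/eqP; lia.
- have := order_path_min ltn_trans ps => /allP /(_ _ m0); by [].
Qed.

Lemma good_vs n s : 0 < n -> good n s ->
  vs [set i : 'I_n | val i \in 0 :: s] = 0 :: s /\ is_path_1_n [set i : 'I_n | val i \in 0 :: s].
Proof.
move=> n0 /and3P[ps aS /eqP ls].
have aS' : all (fun y => y < n) (0 :: s) by rewrite /= n0.
split.
- apply: (irr_sorted_eq ltn_trans ltnn) => //; first exact: vs_sorted.
  move=> x; rewrite mem_vs; apply/existsP/idP => [[i /andP[]]|xs].
  + by rewrite inE => + /eqP <-.
  + have xn : x < n by apply: (allP aS').
    by exists (Ordinal xn); rewrite inE /= xs eqxx.
- apply/andP; split; apply/existsP.
  + by exists (Ordinal n0); rewrite inE /= ?inE eqxx.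
  + have n1 : n.-1 < n by lia.
    exists (Ordinal n1); rewrite inE /= eqxx andbT -ls; exact: mem_last.
Qed.

Lemma pw_vs n (w : weighting n) (A : {set 'I_n}) s : vs A = 0 :: s ->
  path_weight w (path_of A) = pwf (Wof w) 0 s.
Proof.
rewrite /vs /path_weight; case: (path_of A) => [//|x u] /= [x0 us].
by rewrite sum_zip -x0 us.
Qed.

Lemma Xmax_IsMax n (w : weighting n) : 0 < n -> IsMax n (Wof w) (Xmax w).
Proof.
move=> n0; split.
- move=> s gs; have [e pA] := good_vs n0 gs.
  rewrite -(pw_vs w e) /Xmax; exact: (leq_bigmax_cond (F := fun A => path_weight w (path_of A)) _ pA).
- have [_ pA0] := good_vs n0 (good_triv n0).
  have [A pA ->] : exists2 A, is_path_1_n A & Xmax w = path_weight w (path_of A).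
  { have := @eq_bigmax_cond _ [pred A : {set 'I_n} | is_path_1_n A]
       (fun A => path_weight w (path_of A)).
    case.
    + by apply/card_gt0P; eexists; rewrite inE; exact: pA0.
    + by move=> A; rewrite inE => pA e; exists A. }
  have [s e gs] := vs_good pA.
  by exists s; rewrite // (pw_vs w e).
Qed.

Local Open Scope ring_scope.

Section Prob.
Variable R : realFieldType.

Lemma sum_ind (T : finType) (x : T) (H : T -> R) :
  H x = \sum_u ((x == u)%:R * H u).
Proof.
rewrite (bigD1 x) //= eqxx mul1r big1 ?addr0 // => u ux.
by rewrite eq_sym (negbTE ux) mul0r.
Qed.

Lemma prod_ind (T : finType) (P : pred T) :
  \prod_i ((P i)%:R : R) = ([forall i, P i])%:R.
Proof.
case: (boolP [forall i, P i]) => [/forallP H|/forallPn [i Pi]].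
- by rewrite big1 // => i _; rewrite H.
- by rewrite (bigD1 i) //= (negbTE Pi) mul0r.
Qed.

Lemma reindex_pick (E E1 : finType) (phi : E1 -> E) (F : E -> E1 -> R) :
  injective phi ->
  \prod_e (if [pick e1 | phi e1 == e] is Some e1 then F e e1 else 1)
  = \prod_e1 F (phi e1) e1.
Proof.
move=> inj.
rewrite (bigID (fun e => e \in [set phi x | x in setT])) /=.
rewrite [X in _ * X]big1 ?mulr1; last first.
{ move=> e ne; case: pickP => [e1 /eqP ee|//]; move: ne; rewrite -ee.
  by rewrite imset_f ?inE. }
rewrite (eq_bigl (fun e => e \in [set phi x | x in setT])) //.
rewrite big_imset /=; last by move=> a b _ _; apply: inj.
apply: eq_big => [e1|e1 _]; first by rewrite inE.
case: pickP => [e2 /eqP /inj -> //|/(_ e1)]; by rewrite eqxx.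
Qed.

Variables (E E1 E2 : finType) (mu : E -> bool -> R) (phi1 : E1 -> E) (phi2 : E2 -> E).
Hypotheses (inj1 : injective phi1) (inj2 : injective phi2)
  (disj : forall e1 e2, phi1 e1 != phi2 e2)
  (hmu : forall e, mu e true + mu e false = 1).

Lemma ffun_eq_forall (T : finType) (u v : {ffun T -> bool}) :
  (u == v) = [forall e, u e == v e].
Proof.
apply/eqP/forallP => [->//|H]; apply/ffunP => e; exact/eqP.
Qed.

Lemma key_split (u1 : {ffun E1 -> bool}) (u2 : {ffun E2 -> bool}) :
  \sum_(w : {ffun E -> bool}) (\prod_e mu e (w e)) *
     (([ffun e1 => w (phi1 e1)] == u1)%:R * ([ffun e2 => w (phi2 e2)] == u2)%:R)
  = (\prod_e1 mu (phi1 e1) (u1 e1)) * (\prod_e2 mu (phi2 e2) (u2 e2)).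
Proof.
pose g e b := mu e b *
  (if [pick e1 | phi1 e1 == e] is Some e1 then ((b == u1 e1)%:R : R) else 1) *
  (if [pick e2 | phi2 e2 == e] is Some e2 then ((b == u2 e2)%:R : R) else 1).
transitivity (\sum_(w : {ffun E -> bool}) \prod_e g e (w e)).
{ apply: eq_bigr => w _; rewrite /g !big_split /= -mulrA; congr (_ * (_ * _)).
  - rewrite (reindex_pick (fun e e1 => ((w e == u1 e1)%:R : R))) //.
    rewrite prod_ind ffun_eq_forall; congr (_%:R); congr (nat_of_bool _); by apply/forallP/forallP => Hf x; move: (Hf x); rewrite ffunE.
  - rewrite (reindex_pick (fun e e2 => ((w e == u2 e2)%:R : R))) //.
    rewrite prod_ind ffun_eq_forall; congr (_%:R); congr (nat_of_bool _); by apply/forallP/forallP => Hf x; move: (Hf x); rewrite ffunE. }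
rewrite -bigA_distr_bigA /=.
transitivity (\prod_e ((if [pick e1 | phi1 e1 == e] is Some e1 then mu e (u1 e1) else 1)
   * (if [pick e2 | phi2 e2 == e] is Some e2 then mu e (u2 e2) else 1))).
{ apply: eq_bigr => e _; rewrite big_bool /g.
  case: pickP => [e1 /eqP ee1|_]; case: pickP => [e2 /eqP ee2|_].
  - by move: (disj e1 e2); rewrite ee1 ee2 eqxx.
  - by rewrite !mulr1; case: (u1 e1); rewrite /= ?mulr1 ?mulr0 ?addr0 ?add0r.
  - by rewrite !mul1r; case: (u2 e2); rewrite /= ?mulr1 ?mulr0 ?addr0 ?add0r.
  - rewrite !mulr1; exact: hmu. }
rewrite big_split /=.
rewrite (reindex_pick (fun e e1 => mu e (u1 e1))) //.
by rewrite (reindex_pick (fun e e2 => mu e (u2 e2))).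
Qed.

Lemma Ex_split (H : {ffun E1 -> bool} -> R) (G : {ffun E2 -> bool} -> R) :
  \sum_(w : {ffun E -> bool}) (\prod_e mu e (w e)) *
     (H [ffun e1 => w (phi1 e1)] * G [ffun e2 => w (phi2 e2)])
  = (\sum_(u1 : {ffun E1 -> bool}) (\prod_e1 mu (phi1 e1) (u1 e1)) * H u1) *
    (\sum_(u2 : {ffun E2 -> bool}) (\prod_e2 mu (phi2 e2) (u2 e2)) * G u2).
Proof.
transitivity (\sum_(w : {ffun E -> bool}) \sum_(u1 : {ffun E1 -> bool}) \sum_(u2 : {ffun E2 -> bool})
   ((\prod_e mu e (w e)) *
     (([ffun e1 => w (phi1 e1)] == u1)%:R * ([ffun e2 => w (phi2 e2)] == u2)%:R))
   * (H u1 * G u2)).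
{ apply: eq_bigr => w _.
  rewrite (sum_ind _ H) (sum_ind _ G) mulr_suml mulr_sumr; apply: eq_bigr => u1 _.
  rewrite mulr_sumr mulr_sumr; apply: eq_bigr => u2 _. ring. }
rewrite exchange_big /=.
rewrite mulr_suml; apply: eq_bigr => u1 _.
rewrite exchange_big /= mulr_sumr; apply: eq_bigr => u2 _.
rewrite -mulr_suml key_split; ring.
Qed.

Lemma Ex_one : \sum_(w : {ffun E -> bool}) \prod_e mu e (w e) = 1.
Proof.
rewrite -bigA_distr_bigA /=; apply: big1 => e _; rewrite big_bool; exact: hmu.
Qed.

Lemma Ex_forall (P : pred E) :
  \sum_(w : {ffun E -> bool}) (\prod_e mu e (w e)) * ([forall e, P e ==> ~~ w e])%:R
  = \prod_e (if P e then mu e false else 1).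
Proof.
transitivity (\sum_(w : {ffun E -> bool}) \prod_e (mu e (w e) * ((P e ==> ~~ w e))%:R)).
{ by apply: eq_bigr => w _; rewrite big_split /= prod_ind. }
rewrite -(bigA_distr_bigA (fun e b => mu e b * ((P e ==> ~~ b))%:R)) /=; apply: eq_bigr => e _; rewrite big_bool.
by case: (P e); rewrite /= ?mulr1 ?mulr0 ?add0r ?hmu.
Qed.

End Prob.

Lemma prod_if_pow (R : realFieldType) (T : finType) (P : pred T) (q : R) :
  \prod_(e : T) (if P e then q else 1) = q ^+ (\sum_(e : T) (P e : nat))%N.
Proof.
rewrite -prodrXr; apply: eq_bigr => e _; by case: (P e); rewrite ?expr1 ?expr0.
Qed.

Local Close Scope ring_scope.

Lemma sum_lt k b : \sum_(a < k) (a < b : nat) = minn k b.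
Proof.
elim: k => [|k IH]; first by rewrite big_ord0 min0n.
rewrite big_ord_recr /= IH; case: ltnP => h /=; lia.
Qed.

Definition P1 k (e : 'I_k * 'I_k.+1) := (e.1 < e.2) && (e.2 < k).
Definition P2 k (e : 'I_k * 'I_k.+1) := P1 e || (e.2 == k :> nat).

Lemma cnt1 k : \sum_(e : 'I_k * 'I_k.+1) (P1 e : nat) = 'C(k, 2).
Proof.
rewrite -(pair_bigA _ (fun a b => (P1 (a, b) : nat))) /= exchange_big /=.
rewrite big_ord_recr /= [X in (_ + X)%N]big1 ?addn0; last by move=> a _; rewrite /P1 /= ltnn andbF.
rewrite -bin2_sum big_mkord; apply: eq_bigr => b _.
rewrite /P1 /= ltn_ord.
rewrite (eq_bigr (fun a : 'I_k => (a < b : nat))); last by move=> a _; rewrite andbT.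
rewrite sum_lt; have := ltn_ord b; lia.
Qed.

Lemma cnt2 k : \sum_(e : 'I_k * 'I_k.+1) (P2 e : nat) = 'C(k, 2) + k.
Proof.
rewrite -(pair_bigA _ (fun a b => (P2 (a, b) : nat))) /= exchange_big /=.
rewrite big_ord_recr /=.
rewrite [X in (_ + X)%N](eq_bigr (fun _ => 1)); last by move=> a _; rewrite /P2 /= eqxx orbT.
rewrite sum_nat_const card_ord muln1; congr (_ + _).
rewrite -bin2_sum big_mkord; apply: eq_bigr => b _.
rewrite /P2 /P1 /= ltn_ord.
rewrite (eq_bigr (fun a : 'I_k => (a < b : nat))); last first.
{ move=> a _; rewrite andbT; have := ltn_ord b; case: (a < b)%N => /=; lia. }
rewrite sum_lt; have := ltn_ord b; lia.
Qed.

Local Open Scope ring_scope.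

Section Main.
Variable R : realFieldType.
Variable p : R.

Definition mu n (e : 'I_n * 'I_n) (b : bool) : R :=
  if (e.1 < e.2)%N then (if b then p else 1 - p) else (if b then 0 else 1).

Lemma hmu n (e : 'I_n * 'I_n) : mu e true + mu e false = 1.
Proof. rewrite /mu; case: (_ < _)%N; rewrite ?add0r //; ring. Qed.

Definition phi1 m k (e : 'I_k * 'I_k.+1) : 'I_m.+1 * 'I_m.+1 := (inord e.1, inord e.2).
Definition phi2 m k (e : 'I_(m.+1 - k) * 'I_(m.+1 - k)) : 'I_m.+1 * 'I_m.+1 :=
  (inord (e.1 + k), inord (e.2 + k)).

Lemma ltm1 m k (x : 'I_k) : (k <= m)%N -> (x < m.+1)%N.
Proof. have := ltn_ord x; lia. Qed.
Lemma ltm2 m k (x : 'I_k.+1) : (k <= m)%N -> (x < m.+1)%N.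
Proof. have := ltn_ord x; lia. Qed.
Lemma ltm3 m k (x : 'I_(m.+1 - k)) : (x + k < m.+1)%N.
Proof. have := ltn_ord x; lia. Qed.

Lemma phi1_inj m k : (k <= m)%N -> injective (@phi1 m k).
Proof.
move=> km [a b] [c d] [] /(congr1 (@nat_of_ord _)) + /(congr1 (@nat_of_ord _)).
rewrite !inordK; try by (have := ltn_ord a; have := ltn_ord b; have := ltn_ord c; have := ltn_ord d; lia).
move=> ac bd.
by congr pair; apply: val_inj.
Qed.

Lemma phi2_inj m k : injective (@phi2 m k).
Proof.
move=> [a b] [c d] [] /(congr1 (@nat_of_ord _)) + /(congr1 (@nat_of_ord _)).
rewrite !inordK; try by (have := ltn_ord a; have := ltn_ord b; have := ltn_ord c; have := ltn_ord d; lia).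
move=> /addIn ac /addIn bd.
by congr pair; apply: val_inj.
Qed.

Lemma phi_disj m k : (k <= m)%N -> forall e1 e2, @phi1 m k e1 != @phi2 m k e2.
Proof.
move=> km [a b] [c d]; apply/eqP => -[] /(congr1 (@nat_of_ord _)).
rewrite !inordK; try by (have := ltn_ord a; have := ltn_ord b; have := ltn_ord c; have := ltn_ord d; lia).
Qed.

Definition ev k (u : {ffun 'I_k * 'I_k.+1 -> bool}) : bool :=
  [forall e, P1 e ==> ~~ u e] && ~~ [forall e, P2 e ==> ~~ u e].

Lemma evR k (u : {ffun 'I_k * 'I_k.+1 -> bool}) :
  ((ev u)%:R : R) = ([forall e, P1 e ==> ~~ u e])%:R - ([forall e, P2 e ==> ~~ u e])%:R.
Proof.
rewrite /ev; case: (boolP [forall e, P2 e ==> ~~ u e]) => [/forallP H|_].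
- have -> : [forall e, P1 e ==> ~~ u e].
  { apply/forallP => e; apply/implyP => h; have := H e; rewrite /P2 h; exact. }
  by rewrite subrr.
- by rewrite andbT subr0.
Qed.

Lemma evprob m k : (k <= m)%N ->
  \sum_(u : {ffun 'I_k * 'I_k.+1 -> bool}) (\prod_e mu (@phi1 m k e) (u e)) * (ev u)%:R
  = (1 - (1 - p) ^+ k) * (1 - p) ^+ 'C(k, 2).
Proof.
move=> km.
transitivity (\sum_(u : {ffun 'I_k * 'I_k.+1 -> bool}) (\prod_e mu (@phi1 m k e) (u e)) * ([forall e, P1 e ==> ~~ u e])%:R
  - \sum_(u : {ffun 'I_k * 'I_k.+1 -> bool}) (\prod_e mu (@phi1 m k e) (u e)) * ([forall e, P2 e ==> ~~ u e])%:R).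
{ by rewrite -sumrB; apply: eq_bigr => u _; rewrite evR mulrBr. }
rewrite (@Ex_forall R _ (fun e b => mu (@phi1 m k e) b) (fun e => hmu _) (@P1 k)).
rewrite (@Ex_forall R _ (fun e b => mu (@phi1 m k e) b) (fun e => hmu _) (@P2 k)).
have mf : forall e : 'I_k * 'I_k.+1, (e.1 < e.2)%N -> mu (@phi1 m k e) false = 1 - p.
{ move=> e h; rewrite /mu /phi1 /= !inordK ?h //; by [apply: ltm1 | apply: ltm2]. }
rewrite (eq_bigr (fun e => if P1 e then 1 - p else 1)); last first.
{ move=> e _ /=; case h: (P1 e) => //=; rewrite mf //; by case/andP: h. }
rewrite [X in _ - X](eq_bigr (fun e => if P2 e then 1 - p else 1)); last first.
{ move=> e _ /=; case h: (P2 e) => //=; rewrite mf //.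
  case/orP: h => [/andP[] //|/eqP h]; rewrite h; exact: ltn_ord. }
rewrite !prod_if_pow cnt1 cnt2 exprD; ring.
Qed.

Lemma factor2 m k (G : {ffun 'I_(m.+1 - k) * 'I_(m.+1 - k) -> bool} -> R) :
  \sum_(u : {ffun 'I_(m.+1 - k) * 'I_(m.+1 - k) -> bool}) (\prod_e mu (@phi2 m k e) (u e)) * G u
  = \sum_(u : weighting (m.+1 - k)) wprob p u * G u.
Proof.
apply: eq_bigr => u _; congr (_ * _); apply: eq_bigr => e _.
by rewrite /mu /phi2 /= !inordK ?ltm3 // ltn_add2r.
Qed.

Lemma exp_lemma N : (0 < N)%N ->
  \sum_(u : weighting N) wprob p u * (1 + (Xmax u)%:R) = 1 + f p N.
Proof.
case: N => // N _ /=.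
rewrite (eq_bigr (fun u => wprob p u + wprob p u * (Xmax u)%:R)); last first.
{ by move=> u _; rewrite mulrDr mulr1. }
rewrite big_split /=; congr (_ + _).
exact: (@Ex_one R _ (@mu N.+1) (@hmu N.+1)).
Qed.

End Main.

Local Close Scope ring_scope.

Definition u1 m k (w : weighting m.+1) : {ffun 'I_k * 'I_k.+1 -> bool} :=
  [ffun e => w (@phi1 m k e)].
Definition u2 m k (w : weighting m.+1) : weighting (m.+1 - k) :=
  [ffun e => w (@phi2 m k e)].

Definition evn (W : nat -> nat -> bool) k : Prop :=
  (forall a b, a < b -> b < k -> W a b = false) /\ (exists2 j, j < k & W j k).

Lemma u1E m k (w : weighting m.+1) e : k <= m -> u1 k w e = Wof w e.1 e.2.
Proof.
move=> km; rewrite ffunE /phi1 -WofE !inordK //; [apply: ltm2 | apply: ltm1] => //.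
Qed.

Lemma ev_spec m k (w : weighting m.+1) : k <= m -> ev (u1 k w) <-> evn (Wof w) k.
Proof.
move=> km; split.
- case/andP => /forallP A /forallPn [e]; rewrite negb_imply negbK => /andP[h2 ue].
  have ZA : forall a b, a < b -> b < k -> Wof w a b = false.
  { move=> a b ab bk; have ak : a < k by lia.
    have bk1 : b < k.+1 by lia.
    have := A (Ordinal ak, Ordinal bk1); rewrite /P1 /= ab bk /= u1E //= => /negbTE. done. }
  split => //.
  move: h2; rewrite /P2; case/orP => [h1|/eqP e2].
  + by move: (A e); rewrite h1 /= ue.
  + exists e.1; first exact: ltn_ord.
    by have := u1E w e km; rewrite ue e2 => <-.
- case=> ZA [j jk Wj]; apply/andP; split.
  + apply/forallP => e; apply/implyP => /andP[h1 h2]; rewrite u1E // ZA //.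
  + apply/forallPn; exists (Ordinal jk, ord_max); rewrite negb_imply negbK.
    by rewrite /P2 /= eqxx orbT u1E.
Qed.

Lemma u2_agree m k (w : weighting m.+1) :
  forall a b, a < m.+1 - k -> b < m.+1 - k ->
    Wof (u2 k w) a b = Wof w (a + k) (b + k).
Proof.
move=> a b ha hb.
rewrite -[a]/(nat_of_ord (Ordinal ha)) -[b]/(nat_of_ord (Ordinal hb)) WofE ffunE.
by rewrite /phi2 -WofE !inordK //=; lia.
Qed.

Lemma pointwise (R : realFieldType) m (w : weighting m.+1) :
  ((Xmax w)%:R : R)%R = (\sum_(1 <= k < m.+1) ((ev (u1 k w))%:R * (1 + (Xmax (u2 k w))%:R)))%R.
Proof.
set W := Wof w.
have X0 := Xmax_IsMax w (ltn0Sn m).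
pose P := fun k => (k < m.+1) && has (fun j => W j k) (iota 0 k).
case: (boolP [exists k : 'I_m.+1, has (fun j => W j k) (iota 0 k)]) => [Hex|Hnex].
- have exP : exists k, P k.
  { case/existsP: Hex => k hk; exists k; by rewrite /P ltn_ord hk. }
  case: (ex_minnP exP) => k0 /andP[k0m /hasP[j0]] + Wj0 mink0.
  rewrite mem_iota add0n => /andP[_ j0k].
  have k01 : 0 < k0 by lia.
  have ZA : forall a b, a < b -> b < k0 -> W a b = false.
  { move=> a b ab bk; apply/negbTE/negP => Wab.
    have : P b by rewrite /P (ltn_trans bk k0m) /=; apply/hasP; exists a; rewrite // mem_iota /=; lia.
    move/mink0; lia. }
  have ev0 : ev (u1 k0 w) by apply/(ev_spec w); [lia | split => //; exists j0].
  have evk : forall k, 1 <= k < m.+1 -> k != k0 -> ev (u1 k w) = false.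
  { move=> k /andP[k1 km] kk0; apply/negP => /(ev_spec w) [|ZB [j jk Wj]]; first lia.
    have : P k by rewrite /P km /=; apply/hasP; exists j; rewrite // mem_iota /=; lia.
    move/mink0 => k0k.
    have k0k' : k0 < k by lia.
    by have := ZB j0 k0 j0k k0k'; move=> /negbT /negP; apply. }
  rewrite (bigD1_seq k0) /=; last by apply: iota_uniq.
  2: by rewrite mem_index_iota k01.
  rewrite big1_seq ?addr0; last first.
  { move=> k /andP[kk0]; rewrite mem_index_iota => hk; by rewrite evk // mul0r. }
  rewrite ev0 mul1r.
  have X1 : IsMax (m.+1 - k0) (fun a b => W (a + k0) (b + k0)) (Xmax (u2 k0 w)).
  { apply: IsMax_eq (Xmax_IsMax (u2 k0 w) _); first lia.
    - by move=> a b ha hb; rewrite u2_agree.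
    - lia. }
  have := IsMax_uniq X0 (IsMax_step k01 k0m ZA (ex_intro2 _ _ j0 j0k Wj0) X1).
  by move=> ->; rewrite -addn1 natrD addrC.
- have Z : forall a b, a < b -> b < m.+1 -> W a b = false.
  { move=> a b ab bm; apply/negbTE/negP => Wab; move/existsP: Hnex; apply.
    exists (Ordinal bm); apply/hasP; exists a => //; rewrite mem_iota /=; lia. }
  rewrite (IsMax_uniq X0 (IsMax_zero (ltn0Sn m) Z)).
  rewrite big1_seq // => k /andP[_]; rewrite mem_index_iota => /andP[k1 km].
  case: (boolP (ev (u1 k w))) => [/(ev_spec w) [|ZB [j jk Wj]]|]; first lia.
  + by have := Z j k jk km; rewrite /W Wj.
  + by rewrite mul0r.
Qed.

Unset Implicit Arguments.
Local Open Scope ring_scope.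

Theorem lemma9 (R : realFieldType) (p : R) (hp0 : 0 < p) (hp1 : p < 1)
  (n : nat) (hn : (1 <= n)%N) :
  f p n = \sum_(2 <= i < n.+1)
            (1 - (1 - p) ^+ i.-1) * (1 - p) ^+ 'C(i.-1, 2) * (f p (n - i + 1) + 1).
Proof.
case: n hn => // m _.
rewrite -[2%N]/(1 + 1)%N big_addn subn1 /=.
transitivity (\sum_(w : weighting m.+1) wprob p w *
   \sum_(1 <= k < m.+1) ((ev (u1 k w))%:R * (1 + (Xmax (u2 k w))%:R))).
{ by apply: eq_bigr => w _; rewrite pointwise. }
rewrite (eq_bigr (fun w => \sum_(1 <= k < m.+1) wprob p w * ((ev (u1 k w))%:R * (1 + (Xmax (u2 k w))%:R)))); last first.
{ by move=> w _; rewrite mulr_sumr. }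
rewrite exchange_big /=; apply: eq_big_nat => k /andP[k1 km].
have km' : (k <= m)%N by lia.
transitivity ((\sum_(u : {ffun 'I_k * 'I_k.+1 -> bool}) (\prod_e mu p (@phi1 m k e) (u e)) * (ev u)%:R) *
   (\sum_(u : {ffun 'I_(m.+1 - k) * 'I_(m.+1 - k) -> bool}) (\prod_e mu p (@phi2 m k e) (u e)) * (1 + (Xmax u)%:R))).
{ exact: (Ex_split (phi1_inj km') (@phi2_inj m k) (phi_disj km') (@hmu R p m.+1)
      (fun u => (ev u)%:R) (fun u => 1 + (Xmax u)%:R)). }
rewrite evprob // factor2 exp_lemma; last by lia.
rewrite addn1 /= (_ : (m.+1 - k.+1 + 1 = m.+1 - k)%N); last by lia.
by rewrite [f _ _ + 1]addrC.
Qed.
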